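(* Let $q\in(0,1]$. Then $\mathrm{Kaz}(\rho,R(SO_q(3)))=1-\frac{3}{[3]_q}=1-\frac{3}{q^2+q^{-2}+1}$.
   Context: $R(SO_q(3))$ is the fusion algebra with irreducible objects $I=\mathbb{Z}_+$, unit $0$, trivial involution, product $m\cdot n=\sum_{k=|m-n|}^{m+n}k=\sum_kN^k_{m,n}k$, and dimension $d(n)=[2n+1]_q$, where $[x]_q=\frac{q^{-x}-q^x}{q^{-1}-q}$ for $0<q<1$ and $[x]_1=x$. Let $\mathcal{C}_R=\mathbb{C}[I]$ be the complexification; the right regular representation $\rho:\mathcal{C}_R\to B(\ell^2(I))$ is $\rho(m)\delta_n=\sum_kN^k_{n,\bar m}\delta_k$. A finite generating set is a finite $X\subseteq I$ such that every element of $I$ appears with nonzero coefficient in some product of elements of $X$. For a unital $*$-representation $\pi$ and finite generating $X$, $\mathrm{Kaz}(X,\pi,R)=\inf_{\|\xi\|=1}\max_{m\in X}\frac{\|\pi(m)\xi-d(m)\xi\|}{d(m)}$ and $\mathrm{Kaz}(\pi,R)=\inf_X\mathrm{Kaz}(X,\pi,R)$ over finite generating sets. *)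

(* Defs.v *)
From Stdlib Require Import Reals List Arith.
From Coquelicot Require Import Coquelicot.
Open Scope R_scope.

Definition qnum (q : R) (x : nat) : R :=
  if Req_EM_T q 1 then INR x else (/ q ^ x - q ^ x) / (/ q - q).

(** dimension function of R(SO_q(3)) : d(n) = [2n+1]_q *)
Definition dimq (q : R) (n : nat) : R := qnum q (2 * n + 1).

(** fusion coefficients N^k_{m,n} = 1 iff |m-n| <= k <= m+n, else 0 *)
Definition Nfus (m n k : nat) : nat :=
  if (Nat.leb (m - n) k && Nat.leb (n - m) k && Nat.leb k (m + n))%bool
  then 1%nat else 0%nat.

(** coefficients of the product of a word w = [m1; ...; mr] of irreducibles
    (the empty product is the unit 0). coef (m :: w) at k =
    sum_j coef w j * N^k_{m,j}  (only j <= k+m contribute). *)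
Fixpoint prodcoef (w : list nat) (k : nat) : nat :=
  match w with
  | nil => if Nat.eqb k 0 then 1%nat else 0%nat
  | m :: w' => fold_right Nat.add 0%nat
                 (map (fun j => prodcoef w' j * Nfus m j k)%nat (seq 0 (S (k + m))))
  end.

Definition generating (X : list nat) : Prop :=
  forall k : nat, exists w : list nat,
    (forall m, In m w -> In m X) /\ (0 < prodcoef w k)%nat.

(** vectors of l^2(I) (I = N), as complex sequences *)
Definition sqnorm (xi : nat -> C) : R := Series (fun n => Cmod (xi n) ^ 2).
Definition l2norm (xi : nat -> C) : R := sqrt (sqnorm xi).
Definition unit_vec (xi : nat -> C) : Prop :=
  ex_series (fun n => Cmod (xi n) ^ 2) /\ l2norm xi = 1.

(** right regular representation: rho(m) delta_n = sum_k N^k_{n, mbar} delta_k,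
    with trivial involution mbar = m, so (rho(m) xi)(k) = sum_n N^k_{n,m} xi(n)
    (only n <= k+m contribute). *)
Definition rho (m : nat) (xi : nat -> C) : nat -> C :=
  fun k => sum_n (fun n => RtoC (INR (Nfus n m k)) * xi n)%C (k + m).

Definition kaz_val (q : R) (X : list nat) (xi : nat -> C) : R :=
  fold_right Rmax 0
    (map (fun m => l2norm (fun k => (rho m xi k - RtoC (dimq q m) * xi k)%C) / dimq q m) X).

Definition Kaz_X (q : R) (X : list nat) : Rbar :=
  Rbar_glb (fun r => exists xi, unit_vec xi /\ r = Finite (kaz_val q X xi)).

Definition Kaz_rho (q : R) : Rbar :=
  Rbar_glb (fun r => exists X, generating X /\ r = Kaz_X q X).

(* Main.v *)
Require Import Defs.
From Stdlib Require Import Reals Lra Lia List Arith ZArith.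
From Coquelicot Require Import Coquelicot.
Open Scope R_scope.
Open Scope R_scope.

Definition tq (q : R) (k : nat) : R := q ^ k + / q ^ k.

Lemma den_nz q : 0 < q -> q <> 1 -> / q - q <> 0.
Proof.
  intros hq h1 H. assert (q * q = 1).
  { assert (q * (/q - q) = 0) by (rewrite H; ring).
    rewrite Rmult_minus_distr_l, Rinv_r in H0 by lra. lra. }
  assert ((q - 1) * (q + 1) = 0) by nra.
  destruct (Rmult_integral _ _ H1); lra.
Qed.

Lemma den_nz2 q : 0 < q -> q <> 1 -> 1 - q * q <> 0.
Proof.
  intros hq h1 E. apply (den_nz q hq h1).
  assert (/ q - q = (1 - q * q) * / q) by (field; lra). rewrite H, E; ring.
Qed.

Lemma dimq_0 q : 0 < q -> dimq q 0 = 1.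
Proof.
  intros hq. unfold dimq, qnum. simpl. destruct (Req_EM_T q 1).
  - simpl; lra.
  - pose proof (den_nz q hq n). rewrite !Rmult_1_r. unfold Rdiv. apply Rinv_r. auto.
Qed.

Lemma qnum3 q : 0 < q -> qnum q 3 = q ^ 2 + / q ^ 2 + 1.
Proof.
  intros hq. unfold qnum. destruct (Req_EM_T q 1).
  - subst. simpl. lra.
  - pose proof (den_nz q hq n). field. split; [lra|]. intro E. apply H.
    assert (/ q - q = (1 - q * q) * / q) by (field; lra). rewrite H0, E; ring.
Qed.

Lemma dimq_S q m : 0 < q -> dimq q (S m) = dimq q m + tq q (2 * m + 2).
Proof.
  intros hq. unfold dimq, qnum, tq. destruct (Req_EM_T q 1).
  - subst. rewrite !pow1. rewrite Rinv_1. replace (1 + 1) with (INR 2) by (simpl; lra).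
    rewrite <- !plus_INR. f_equal. lia.
  - pose proof (den_nz q hq n).
    replace (2 * S m + 1)%nat with (S (S (2 * m + 1))) by lia.
    replace (2 * m + 2)%nat with (S (2 * m + 1)) by lia.
    assert (0 < q ^ (2*m+1)) by (apply pow_lt; lra).
    rewrite <- !tech_pow_Rmult.
    set (p := q ^ (2 * m + 1)) in *.
    pose proof (den_nz2 q hq n). field. repeat split; auto; lra.
Qed.

Lemma tq_mono q k : 0 < q -> q <= 1 -> (2 <= k)%nat -> tq q 2 <= tq q k.
Proof.
  intros hq hq1 hk. unfold tq.
  assert (0 < q ^ k) by (apply pow_lt; lra).
  assert (q ^ k <= q ^ 2).
  { replace k with (2 + (k - 2))%nat by lia. rewrite pow_add.
    assert (q ^ (k-2) <= 1) by (rewrite <- (pow1 (k-2)); apply pow_incr; lra).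
    assert (0 < q ^ 2) by (apply pow_lt; lra).
    assert (0 <= q ^ (k-2)) by (apply pow_le; lra). nra. }
  assert (q ^ 2 <= 1) by (rewrite <- (pow1 2); apply pow_incr; lra).
  set (x := q ^ k) in *. set (y := q ^ 2) in *.
  assert (/ x - / y = (y - x) / (x * y)) by (field; lra).
  assert ((y - x) / (x * y) >= y - x).
  { apply Rle_ge. unfold Rdiv. rewrite <- (Rmult_1_r (y - x)) at 1.
    apply Rmult_le_compat_l; [lra|].
    rewrite <- Rinv_1. apply Rinv_le_contravar; nra. }
  lra.
Qed.

Lemma tq_ge2 q k : 0 < q -> 2 <= tq q k.
Proof.
  intros hq. unfold tq. assert (0 < q ^ k) by (apply pow_lt; lra).
  set (x := q ^ k) in *.
  assert (x + / x - 2 = (x - 1) ^ 2 / x) by (field; lra).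
  assert (0 <= (x - 1) ^ 2 / x).
  { unfold Rdiv. apply Rmult_le_pos. apply pow2_ge_0. left; apply Rinv_0_lt_compat; lra. }
  lra.
Qed.

Lemma dimq_ge q m : 0 < q -> INR (2 * m + 1) <= dimq q m.
Proof.
  intros hq. induction m.
  - rewrite dimq_0 by auto. simpl; lra.
  - rewrite dimq_S by auto. pose proof (tq_ge2 q (2 * m + 2) hq).
    replace (2 * S m + 1)%nat with ((2 * m + 1) + 2)%nat by lia.
    rewrite plus_INR. simpl (INR 2). lra.
Qed.

Lemma dimq_ratio q m : 0 < q -> q <= 1 -> (1 <= m)%nat ->
  INR (2 * m + 1) * dimq q 1 <= 3 * dimq q m.
Proof.
  intros hq hq1 hm. induction m.
  - lia.
  - destruct m.
    + simpl. lra.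
    + specialize (IHm ltac:(lia)).
      rewrite (dimq_S q (S m)) by auto.
      pose proof (tq_mono q (2 * S m + 2) hq hq1 ltac:(lia)).
      pose proof (tq_ge2 q 2 hq).
      assert (dimq q 1 = dimq q 0 + tq q 2) by (rewrite dimq_S by auto; reflexivity).
      rewrite dimq_0 in H1 by auto.
      replace (2 * S (S m) + 1)%nat with ((2 * S m + 1) + 2)%nat by lia.
      rewrite plus_INR. simpl (INR 2). nra.
Qed.


Lemma sumR_S (a : nat -> R) n : sum_n a (S n) = sum_n a n + a (S n) :> R.
Proof. rewrite sum_Sn. reflexivity. Qed.
Lemma sumR_O (a : nat -> R) : sum_n a 0 = a 0%nat :> R.
Proof. rewrite sum_O. reflexivity. Qed.
Lemma sumC_S (a : nat -> C) n : sum_n a (S n) = (sum_n a n + a (S n))%C.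
Proof. rewrite sum_Sn. reflexivity. Qed.

Lemma sumR_le (a b : nat -> R) K : (forall n, (n <= K)%nat -> a n <= b n) ->
  sum_n a K <= sum_n b K.
Proof.
  induction K; intros H.
  - rewrite !sumR_O. apply H; lia.
  - rewrite !sumR_S. apply Rplus_le_compat; [apply IHK|apply H]; intros; try apply H; lia.
Qed.

Lemma sumR_ge0 (a : nat -> R) K : (forall n, (n <= K)%nat -> 0 <= a n) -> 0 <= sum_n a K.
Proof.
  induction K; intros H.
  - rewrite !sumR_O. apply H; lia.
  - rewrite !sumR_S. apply Rplus_le_le_0_compat; [apply IHK|apply H]; intros; try apply H; lia.
Qed.

Lemma sumR_plus (a b : nat -> R) K : sum_n (fun n => a n + b n) K = sum_n a K + sum_n b K :> R.
Proof. induction K. rewrite !sumR_O; auto. rewrite !sumR_S, IHK. ring. Qed.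

Lemma sumR_scal (c : R) (a : nat -> R) K : sum_n (fun n => c * a n) K = c * sum_n a K :> R.
Proof. induction K. rewrite !sumR_O; auto. rewrite !sumR_S, IHK. ring. Qed.

Lemma sumR_ext (a b : nat -> R) K : (forall n, (n <= K)%nat -> a n = b n) -> sum_n a K = sum_n b K :> R.
Proof. apply sum_n_ext_loc. Qed.

Lemma sumR_zero (a : nat -> R) K : (forall n, (n <= K)%nat -> a n = 0) -> sum_n a K = 0 :> R.
Proof.
  intros H. rewrite (sumR_ext a (fun n => 0 * 0) K).
  rewrite sumR_scal. ring. intros; rewrite H; auto; ring.
Qed.

Lemma sumR_mono (a : nat -> R) N M : (forall n, 0 <= a n) -> (N <= M)%nat ->
  sum_n a N <= sum_n a M.
Proof.
  intros H hNM. induction hNM. lra. rewrite sumR_S. specialize (H (S m)). lra.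
Qed.

Lemma sumR_extend (a : nat -> R) N M : (N <= M)%nat ->
  (forall n, (N < n <= M)%nat -> a n = 0) -> sum_n a N = sum_n a M :> R.
Proof.
  intros hNM. induction hNM; intros H. auto.
  rewrite sumR_S, H by lia. rewrite IHhNM. symmetry; apply Rplus_0_r. intros; apply H; lia.
Qed.

Lemma sumR_swap (f : nat -> nat -> R) K M :
  sum_n (fun k => sum_n (fun n => f k n) M) K = sum_n (fun n => sum_n (fun k => f k n) K) M :> R.
Proof.
  induction K.
  - rewrite sumR_O. apply sumR_ext. intros. rewrite sumR_O; auto.
  - rewrite sumR_S, IHK. rewrite <- sumR_plus. apply sumR_ext. intros. rewrite sumR_S. auto.
Qed.

Lemma sumC_R (f : nat -> R) K : sum_n (fun n => RtoC (f n)) K = RtoC (sum_n f K).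
Proof.
  induction K. rewrite sum_O, sumR_O. auto.
  rewrite sumC_S, sumR_S, IHK. rewrite RtoC_plus. auto.
Qed.

Lemma sumC_norm (c : nat -> nat) (xi : nat -> C) K :
  Cmod (sum_n (fun n => RtoC (INR (c n)) * xi n)%C K) <= sum_n (fun n => INR (c n) * Cmod (xi n)) K.
Proof.
  induction K.
  - rewrite sum_O, sumR_O. rewrite Cmod_mult, Cmod_R, Rabs_pos_eq by apply pos_INR. lra.
  - rewrite sumC_S, sumR_S. eapply Rle_trans. apply Cmod_triangle.
    rewrite Cmod_mult, Cmod_R, Rabs_pos_eq by apply pos_INR. lra.
Qed.

Definition ind (lo hi n : nat) : nat :=
  if (Nat.leb lo n && Nat.leb n hi)%bool then 1%nat else 0%nat.

Lemma count_ind lo hi K :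
  sum_n (fun n => INR (ind lo hi n)) K =
  INR (if Nat.ltb K lo then 0 else Nat.min K hi + 1 - lo).
Proof.
  induction K.
  - rewrite sumR_O. f_equal. unfold ind. destruct lo; reflexivity.
  - rewrite sumR_S, IHK, <- plus_INR. f_equal. unfold ind.
    destruct (Nat.ltb_spec K lo), (Nat.ltb_spec (S K) lo), (Nat.leb_spec lo (S K)),
      (Nat.leb_spec (S K) hi); cbn [andb]; lia.
Qed.

Lemma count_ind_le lo hi K :
  sum_n (fun n => INR (ind lo hi n)) K <= INR (hi + 1 - lo).
Proof.
  rewrite count_ind. apply le_INR. destruct (Nat.ltb_spec K lo); lia.
Qed.

Lemma Nfus_le1 n m k : (Nfus n m k <= ind (k - m) (k + m) n)%nat.
Proof.
  unfold Nfus, ind.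
  destruct (Nat.leb_spec (n - m) k), (Nat.leb_spec (m - n) k), (Nat.leb_spec k (n + m)),
    (Nat.leb_spec (k - m) n), (Nat.leb_spec n (k + m)); simpl; lia.
Qed.

Lemma Nfus_le2 n m k : (Nfus n m k <= ind (n - m) (n + m) k)%nat.
Proof.
  unfold Nfus, ind.
  destruct (Nat.leb_spec (n - m) k), (Nat.leb_spec (m - n) k), (Nat.leb_spec k (n + m)),
    (Nat.leb_spec (n - m) k), (Nat.leb_spec k (n + m)); simpl; lia.
Qed.

Lemma Nfus_zero n m k : (k + m < n)%nat -> Nfus n m k = 0%nat.
Proof.
  intros h. unfold Nfus. destruct (Nat.leb_spec (n - m) k); simpl; auto. lia.
Qed.

Lemma Nfus_one n k : (1 <= k)%nat -> Nfus n 1 k = ind (k - 1) (k + 1) n.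
Proof.
  intros h. unfold Nfus, ind.
  destruct (Nat.leb_spec (n - 1) k), (Nat.leb_spec (1 - n) k), (Nat.leb_spec k (n + 1)),
    (Nat.leb_spec (k - 1) n), (Nat.leb_spec n (k + 1)); simpl; lia.
Qed.

Lemma count_N1 m k K : sum_n (fun n => INR (Nfus n m k)) K <= INR (2 * m + 1).
Proof.
  eapply Rle_trans. apply sumR_le. intros. apply le_INR, Nfus_le1.
  eapply Rle_trans. apply count_ind_le. apply le_INR. lia.
Qed.

Lemma count_N2 m n K : sum_n (fun k => INR (Nfus n m k)) K <= INR (2 * m + 1).
Proof.
  eapply Rle_trans. apply sumR_le. intros. apply le_INR, Nfus_le2.
  eapply Rle_trans. apply count_ind_le. apply le_INR. lia.
Qed.

Definition Rk m (xi : nat -> C) k := sum_n (fun n => INR (Nfus n m k) * Cmod (xi n)) (k + m).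
Definition Tk m (xi : nat -> C) k := sum_n (fun n => INR (Nfus n m k) * Cmod (xi n) ^ 2) (k + m).
Definition Sx (xi : nat -> C) K := sum_n (fun n => Cmod (xi n) ^ 2) K.

Lemma rho_bound m xi k : Cmod (rho m xi k) <= Rk m xi k.
Proof. unfold rho, Rk. apply (sumC_norm (fun n => Nfus n m k)). Qed.

Lemma Rk_ge0 m xi k : 0 <= Rk m xi k.
Proof. apply sumR_ge0. intros. apply Rmult_le_pos. apply pos_INR. apply Cmod_ge_0. Qed.

Lemma Tk_ge0 m xi k : 0 <= Tk m xi k.
Proof. apply sumR_ge0. intros. apply Rmult_le_pos. apply pos_INR. apply pow2_ge_0. Qed.

Lemma Sx_ge0 xi K : 0 <= Sx xi K.
Proof. apply sumR_ge0. intros. apply pow2_ge_0. Qed.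

Lemma Sx_mono xi N M : (N <= M)%nat -> Sx xi N <= Sx xi M.
Proof. intros. apply sumR_mono; auto. intros; apply pow2_ge_0. Qed.

Lemma sum_T m xi K : sum_n (fun k => Tk m xi k) K <= INR (2 * m + 1) * Sx xi (K + m).
Proof.
  rewrite (sumR_ext _ (fun k => sum_n (fun n => INR (Nfus n m k) * Cmod (xi n) ^ 2) (K + m))).
  2:{ intros k hk. unfold Tk. apply sumR_extend. lia. intros n hn.
      rewrite Nfus_zero by lia. simpl; ring. }
  rewrite sumR_swap. unfold Sx. rewrite <- sumR_scal. apply sumR_le. intros n _.
  rewrite (sumR_ext _ (fun k => Cmod (xi n) ^ 2 * INR (Nfus n m k))) by (intros; ring).
  rewrite sumR_scal. rewrite Rmult_comm. apply Rmult_le_compat_r. apply pow2_ge_0.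
  apply count_N2.
Qed.

Lemma xR_bound m xi k :
  Cmod (xi k) * Rk m xi k <= INR (2 * m + 1) / 2 * Cmod (xi k) ^ 2 + / 2 * Tk m xi k.
Proof.
  unfold Rk, Tk. rewrite <- sumR_scal.
  eapply Rle_trans.
  apply (sumR_le _ (fun n => Cmod (xi k) ^ 2 / 2 * INR (Nfus n m k) + / 2 * (INR (Nfus n m k) * Cmod (xi n) ^ 2))).
  { intros n _. pose proof (pos_INR (Nfus n m k)).
    pose proof (Cmod_ge_0 (xi k)). pose proof (Cmod_ge_0 (xi n)).
    assert (2 * (Cmod (xi k) * Cmod (xi n)) <= Cmod (xi k) ^ 2 + Cmod (xi n) ^ 2).
    { pose proof (pow2_ge_0 (Cmod (xi k) - Cmod (xi n))). nra. }
    nra. }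
  rewrite sumR_plus, sumR_scal, sumR_scal.
  pose proof (count_N1 m k (k + m)). pose proof (pow2_ge_0 (Cmod (xi k))).
  nra.
Qed.

Lemma sum_xR m xi K :
  sum_n (fun k => Cmod (xi k) * Rk m xi k) K <=
  INR (2 * m + 1) / 2 * Sx xi K + / 2 * (INR (2 * m + 1) * Sx xi (K + m)).
Proof.
  eapply Rle_trans. apply sumR_le. intros. apply xR_bound.
  rewrite sumR_plus, sumR_scal, sumR_scal. unfold Sx.
  pose proof (sum_T m xi K). unfold Sx in H. change (sum_n (Tk m xi) K) with (sum_n (fun k => Tk m xi k) K). lra.
Qed.

Lemma R_sq m xi k : Rk m xi k ^ 2 <= INR (2 * m + 1) * Tk m xi k.
Proof.
  set (c := INR (2 * m + 1)). assert (hc : 0 < c) by (unfold c; apply lt_0_INR; lia).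
  set (R := Rk m xi k).
  assert (c * R ^ 2 <= c * c / 2 * Tk m xi k + R ^ 2 / 2 * sum_n (fun n => INR (Nfus n m k)) (k + m)).
  { assert (c * R ^ 2 = sum_n (fun n => INR (Nfus n m k) * (c * (Cmod (xi n) * R))) (k + m)).
    { replace (c * R ^ 2) with ((c * R) * Rk m xi k) by (unfold R; ring).
      unfold Rk. rewrite <- sumR_scal. apply sumR_ext. intros. ring. }
    rewrite H. eapply Rle_trans.
    apply (sumR_le _ (fun n => (c * c / 2) * (INR (Nfus n m k) * Cmod (xi n) ^ 2) + R ^ 2 / 2 * INR (Nfus n m k))).
    { intros n _. pose proof (pos_INR (Nfus n m k)).
      assert (2 * (c * (Cmod (xi n) * R)) <= c * c * Cmod (xi n) ^ 2 + R ^ 2).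
      { pose proof (pow2_ge_0 (c * Cmod (xi n) - R)). nra. }
      nra. }
    rewrite sumR_plus, sumR_scal, sumR_scal. fold (Tk m xi k). lra. }
  pose proof (count_N1 m k (k + m)). fold c in H0.
  pose proof (pow2_ge_0 R).
  assert (c * R ^ 2 <= c * (c * Tk m xi k)) by nra.
  apply Rmult_le_reg_l with c; auto.
Qed.

Lemma unit_facts xi : unit_vec xi ->
  is_lim_seq (Sx xi) 1 /\ (forall K, Sx xi K <= 1).
Proof.
  intros [hex hn]. unfold l2norm, sqnorm in hn.
  assert (hS : Series (fun n => Cmod (xi n) ^ 2) = 1).
  { destruct (Rle_or_lt 0 (Series (fun n => Cmod (xi n) ^ 2))) as [h|h].
    - rewrite <- (sqrt_sqrt _ h), hn. ring.
    - rewrite sqrt_neg_0 in hn; lra. }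
  assert (hl : is_lim_seq (Sx xi) 1).
  { pose proof (Series_correct _ hex). rewrite hS in H. exact H. }
  split; auto. intros K. apply (is_lim_seq_incr_compare (Sx xi) 1 hl).
  intros n. apply Sx_mono. lia.
Qed.

Lemma lower m d xi : unit_vec xi -> INR (2 * m + 1) <= d ->
  d - INR (2 * m + 1) <= l2norm (fun k => (rho m xi k - RtoC d * xi k)%C).
Proof.
  intros hu hd. destruct (unit_facts xi hu) as [hlimS hSle].
  set (c := INR (2 * m + 1)) in *. assert (hc : 0 < c) by (unfold c; apply lt_0_INR; lia).
  set (a := d - c).
  set (u := fun k => (rho m xi k - RtoC d * xi k)%C).
  assert (ub : forall k, Cmod (u k) <= Rk m xi k + d * Cmod (xi k)).
  { intros k. unfold u. unfold Cminus. eapply Rle_trans. apply Cmod_triangle.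
    rewrite Cmod_opp, Cmod_mult, Cmod_R, Rabs_pos_eq by lra.
    pose proof (rho_bound m xi k). lra. }
  assert (lb : forall k, d * Cmod (xi k) - Rk m xi k <= Cmod (u k)).
  { intros k. assert (E : (RtoC d * xi k = rho m xi k + - u k)%C) by (unfold u; ring).
    pose proof (Cmod_triangle (rho m xi k) (- u k)). rewrite <- E, Cmod_opp in H.
    rewrite Cmod_mult, Cmod_R, Rabs_pos_eq in H by lra.
    pose proof (rho_bound m xi k). lra. }
  set (P := fun K => sum_n (fun k => Cmod (u k) ^ 2) K).
  assert (hub : forall K, P K <= 2 * c * c + 2 * d * d).
  { intros K. unfold P. eapply Rle_trans.
    apply (sumR_le _ (fun k => (2 * c) * Tk m xi k + (2 * d * d) * Cmod (xi k) ^ 2)).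
    { intros k _. pose proof (ub k). pose proof (R_sq m xi k). fold c in H0.
      pose proof (Cmod_ge_0 (u k)). pose proof (Rk_ge0 m xi k). pose proof (Cmod_ge_0 (xi k)).
      assert (Cmod (u k) ^ 2 <= (Rk m xi k + d * Cmod (xi k)) ^ 2) by (apply pow_incr; lra).
      pose proof (pow2_ge_0 (Rk m xi k - d * Cmod (xi k))). nra. }
    rewrite sumR_plus, sumR_scal, sumR_scal.
    pose proof (sum_T m xi K). fold c in H.
    change (sum_n (Tk m xi) K) with (sum_n (fun k => Tk m xi k) K).
    pose proof (hSle K). pose proof (hSle (K + m)%nat). pose proof (Sx_ge0 xi (K + m)).
    pose proof (Sx_ge0 xi K). unfold Sx in *. nra. }
  assert (hinc : forall K, P K <= P (S K)).
  { intros K. unfold P. rewrite sumR_S. pose proof (pow2_ge_0 (Cmod (u (S K)))). lra. }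
  destruct (ex_finite_lim_seq_incr P _ hinc hub) as [l hl].
  assert (hSer : Series (fun k => Cmod (u k) ^ 2) = l).
  { unfold Series. change (Lim_seq (sum_n (fun k => Cmod (u k) ^ 2))) with (Lim_seq P).
    rewrite (is_lim_seq_unique _ _ hl). reflexivity. }
  assert (hlb : forall K, (2 * a * d - a * a - a * c) * Sx xi K + (- (a * c)) * Sx xi (K + m) <= P K).
  { intros K. unfold P. eapply Rle_trans. 2:{
      apply (sumR_le (fun k => (2 * a * d - a * a) * Cmod (xi k) ^ 2 + (- (2 * a)) * (Cmod (xi k) * Rk m xi k))).
      intros k _. pose proof (lb k). pose proof (Cmod_ge_0 (xi k)). pose proof (Cmod_ge_0 (u k)).
      assert (0 <= a) by (unfold a; lra).
      pose proof (pow2_ge_0 (Cmod (u k) - a * Cmod (xi k))).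
      assert (a * Cmod (xi k) * (d * Cmod (xi k) - Rk m xi k) <= a * Cmod (xi k) * Cmod (u k)).
      { apply Rmult_le_compat_l; [nra|lra]. }
      nra. }
    rewrite sumR_plus, sumR_scal, sumR_scal.
    pose proof (sum_xR m xi K). fold c in H. unfold Sx in *.
    assert (0 <= a) by (unfold a; lra).
    nra. }
  assert (hlim2 : is_lim_seq (fun K => (2 * a * d - a * a - a * c) * Sx xi K + (- (a * c)) * Sx xi (K + m))
                    ((2 * a * d - a * a - a * c) * 1 + (- (a * c)) * 1)).
  { apply is_lim_seq_plus'; apply is_lim_seq_mult'; try apply is_lim_seq_const.
    exact hlimS. apply (is_lim_seq_incr_n (Sx xi) m 1). exact hlimS. }
  pose proof (is_lim_seq_le _ _ _ _ hlb hlim2 hl) as Hle. simpl in Hle.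
  unfold l2norm, sqnorm. fold u. rewrite hSer.
  assert (0 <= a) by (unfold a; lra).
  rewrite <- (sqrt_pow2 a) by auto. apply sqrt_le_1_alt. unfold a in *. nra.
Qed.

Lemma fold_ge (f : nat -> nat) l x : In x l -> (f x <= fold_right Nat.add 0%nat (map f l))%nat.
Proof. induction l; simpl; intros H. contradiction. destruct H; subst; [lia|]. specialize (IHl H); lia. Qed.

Lemma fold_zero (f : nat -> nat) l : (forall x, In x l -> f x = 0%nat) -> fold_right Nat.add 0%nat (map f l) = 0%nat.
Proof. induction l; simpl; intros H. auto. rewrite H by auto. rewrite IHl; auto. Qed.

Lemma prodcoef_zero w : (forall m, In m w -> m = 0%nat) -> forall k, (1 <= k)%nat -> prodcoef w k = 0%nat.
Proof.
  induction w as [|m w IH]; intros H k hk.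
  - simpl. destruct k; [lia|reflexivity].
  - change (prodcoef (m :: w) k) with (fold_right Nat.add 0%nat (map (fun j => (prodcoef w j * Nfus m j k)%nat) (seq 0 (S (k + m))))).
    assert (m = 0%nat) by (apply H; left; auto). subst.
    apply fold_zero. intros j _.
    destruct (Nat.eq_dec j k).
    + subst. rewrite IH; auto. intros; apply H; right; auto.
    + replace (Nfus 0 j k) with 0%nat. lia.
      unfold Nfus. destruct (Nat.leb_spec (0 - j) k), (Nat.leb_spec (j - 0) k), (Nat.leb_spec k (0 + j));
        cbn [andb]; lia.
Qed.

Lemma list_split (X : list nat) : (exists m, In m X /\ (1 <= m)%nat) \/ (forall m, In m X -> m = 0%nat).
Proof.
  induction X as [|a X IH].
  - right; intros m [].
  - destruct a as [|a].
    + destruct IH as [[m [h1 h2]]|h]. left; exists m; split; [right|]; auto.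
      right. intros m [<-|hm]; auto.
    + left. exists (S a). split; [left; auto|lia].
Qed.

Lemma gen_pos X : generating X -> exists m, In m X /\ (1 <= m)%nat.
Proof.
  intros hg. destruct (list_split X) as [h|h]; auto.
  destruct (hg 1%nat) as [w [hw hp]].
  rewrite prodcoef_zero in hp; [lia| |lia]. intros m hm. apply h, hw, hm.
Qed.

Lemma gen1 : generating (1%nat :: nil).
Proof.
  intros k. exists (repeat 1%nat k). split.
  - intros m hm. apply repeat_spec in hm. subst. left; auto.
  - induction k.
    + simpl. lia.
    + simpl repeat.
      change (prodcoef (1%nat :: repeat 1%nat k) (S k)) with (fold_right Nat.add 0%nat (map (fun j => (prodcoef (repeat 1%nat k) j * Nfus 1 j (S k))%nat) (seq 0 (S (S k + 1))))).
      eapply Nat.lt_le_trans. 2:{ apply (fold_ge (fun j => (prodcoef (repeat 1%nat k) j * Nfus 1 j (S k))%nat)).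
        apply in_seq. instantiate (1 := k). lia. }
      simpl. replace (Nfus 1 k (S k)) with 1%nat. lia.
      unfold Nfus. destruct (Nat.leb_spec (1 - k) (S k)), (Nat.leb_spec (k - 1) (S k)),
        (Nat.leb_spec (S k) (1 + k)); cbn [andb]; lia.
Qed.

Lemma fold_max_ge (g : nat -> R) X m : In m X -> g m <= fold_right Rmax 0 (map g X).
Proof.
  induction X; simpl; intros H. contradiction.
  destruct H. subst. apply Rmax_l. eapply Rle_trans. apply IHX; auto. apply Rmax_r.
Qed.

Lemma Lval q m xi : 0 < q -> q <= 1 -> (1 <= m)%nat -> unit_vec xi ->
  1 - 3 / qnum q 3 <= l2norm (fun k => (rho m xi k - RtoC (dimq q m) * xi k)%C) / dimq q m.
Proof.
  intros hq hq1 hm hu.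
  pose proof (dimq_ge q m hq) as hd.
  pose proof (lower m (dimq q m) xi hu hd) as hl.
  pose proof (dimq_ratio q m hq hq1 hm) as hr.
  change (dimq q 1) with (qnum q 3) in hr.
  pose proof (dimq_ge q 1 hq) as hd1. change (dimq q 1) with (qnum q 3) in hd1.
  set (d := dimq q m) in *. set (D := qnum q 3) in *. set (c := INR (2 * m + 1)) in *.
  assert (hc : 0 < c) by (unfold c; apply lt_0_INR; lia).
  assert (h3 : 3 <= D) by (simpl in hd1; lra).
  assert (1 - 3 / D <= (d - c) / d).
  { assert ((d - c) / d - (1 - 3 / D) = (3 * d - c * D) / (d * D)) by (field; lra).
    assert (0 <= (3 * d - c * D) / (d * D)).
    { unfold Rdiv. apply Rmult_le_pos. lra. left; apply Rinv_0_lt_compat; nra. }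
    lra. }
  eapply Rle_trans. apply H. unfold Rdiv. apply Rmult_le_compat_r. left; apply Rinv_0_lt_compat; lra. lra.
Qed.

Lemma glb_spec (E : Rbar -> Prop) : Rbar_is_glb E (Rbar_glb E).
Proof. unfold Rbar_glb. destruct (Rbar_ex_glb E); auto. Qed.

Lemma KazX_lower q X : 0 < q -> q <= 1 -> generating X ->
  Rbar_le (Finite (1 - 3 / qnum q 3)) (Kaz_X q X).
Proof.
  intros hq hq1 hg. destruct (gen_pos X hg) as [m [hmX hm]].
  unfold Kaz_X. apply (proj2 (glb_spec _)).
  intros x [xi [hu ->]]. simpl. unfold kaz_val.
  eapply Rle_trans. apply (Lval q m xi hq hq1 hm hu).
  apply (fold_max_ge (fun m => l2norm (fun k => (rho m xi k - RtoC (dimq q m) * xi k)%C) / dimq q m)).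
  auto.
Qed.

Lemma nat_unbounded r : exists n : nat, r < INR n.
Proof.
  destruct (archimed (Rabs r)) as [h _].
  assert (0 <= up (Rabs r))%Z.
  { apply le_IZR. pose proof (Rabs_pos r). simpl. lra. }
  exists (Z.to_nat (up (Rabs r))). rewrite INR_IZR_INZ, Z2Nat.id by auto.
  pose proof (Rle_abs r). lra.
Qed.

Lemma sum_const (c : R) K : sum_n (fun _ => c) K = INR (S K) * c :> R.
Proof. induction K. rewrite sumR_O. simpl. ring. rewrite sumR_S, IHK, (S_INR (S K)). ring. Qed.

Lemma series_fin (a : nat -> R) M : (forall n, (M < n)%nat -> a n = 0) ->
  is_series a (sum_n a M) /\ Series a = sum_n a M.
Proof.
  intros H.
  assert (is_series a (sum_n a M)).
  { assert (is_lim_seq (sum_n a) (sum_n a M)).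
    { apply (is_lim_seq_ext_loc (fun _ => sum_n a M)). exists M. intros n hn.
      apply sumR_extend; auto. intros; apply H; lia. apply is_lim_seq_const. }
    exact H0. }
  split; auto. apply is_series_unique; auto.
Qed.

Lemma CmodR2 r : Cmod (RtoC r) ^ 2 = r ^ 2.
Proof. rewrite Cmod_R. rewrite <- (pow2_abs r). reflexivity. Qed.

Lemma sq_bound t b : - b <= t <= b -> t ^ 2 <= b ^ 2.
Proof. intros. assert (0 <= (b - t) * (t + b)) by (apply Rmult_le_pos; lra). nra. Qed.

Lemma bnd_helper s2 A B I y : 0 <= s2 -> 0 <= A -> 0 <= B -> 1 <= I -> y <= B * s2 ->
  y <= s2 * (A + B * I).
Proof.
  intros. assert (B * s2 <= B * s2 * I).
  { rewrite <- (Rmult_1_r (B * s2)) at 1. apply Rmult_le_compat_l; auto. apply Rmult_le_pos; auto. }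
  assert (0 <= s2 * A) by (apply Rmult_le_pos; auto). nra.
Qed.

Section Test.
Variable N : nat.
Hypothesis hN : (2 <= N)%nat.
Let s := / sqrt (INR N).
Definition xv (n : nat) : R := if Nat.ltb n N then / sqrt (INR N) else 0.

Lemma s_pos : 0 < s.
Proof. unfold s. apply Rinv_0_lt_compat, sqrt_lt_R0, lt_0_INR. lia. Qed.

Lemma s2 : s ^ 2 * INR N = 1.
Proof.
  unfold s. assert (0 < INR N) by (apply lt_0_INR; lia).
  rewrite <- Rinv_pow by (apply Rgt_not_eq, sqrt_lt_R0; auto).
  rewrite <- Rsqr_pow2, Rsqr_sqrt by lra. field. lra.
Qed.

Lemma xv_unit : unit_vec (fun n => RtoC (xv n)).
Proof.
  destruct (series_fin (fun n => Cmod (RtoC (xv n)) ^ 2) (N - 1)) as [h1 h2].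
  { intros n hn. rewrite CmodR2. unfold xv. destruct (Nat.ltb_spec n N). lia. ring. }
  assert (E : sum_n (fun n => Cmod (RtoC (xv n)) ^ 2) (N - 1) = 1).
  { rewrite (sumR_ext _ (fun _ => s ^ 2)).
    rewrite sum_const. replace (S (N - 1)) with N by lia. rewrite Rmult_comm. apply s2.
    intros n hn. rewrite CmodR2. unfold xv. destruct (Nat.ltb_spec n N). reflexivity. lia. }
  rewrite E in h1, h2. split. exists 1; auto. unfold l2norm, sqnorm. rewrite h2. apply sqrt_1.
Qed.

Definition yv (k : nat) : R := sum_n (fun n => INR (Nfus n 1 k) * xv n) (k + 1).

Lemma rho_xv k : rho 1 (fun n => RtoC (xv n)) k = RtoC (yv k).
Proof.
  unfold rho, yv. rewrite <- sumC_R. apply sum_n_ext. intros n. rewrite RtoC_mult. reflexivity.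
Qed.

Lemma xv_range n : xv n = s \/ xv n = 0.
Proof. unfold xv. destruct (Nat.ltb n N); auto. Qed.

Lemma yv_range k : 0 <= yv k <= 3 * s.
Proof.
  pose proof s_pos. split.
  - apply sumR_ge0. intros n _. apply Rmult_le_pos. apply pos_INR. destruct (xv_range n) as [->| ->]; lra.
  - unfold yv. eapply Rle_trans. apply (sumR_le _ (fun n => s * INR (Nfus n 1 k))).
    intros n _. pose proof (pos_INR (Nfus n 1 k)). destruct (xv_range n) as [->| ->]; nra.
    rewrite sumR_scal. pose proof (count_N1 1 k (k + 1)). simpl in H0. nra.
Qed.

Lemma yv_interior k : (1 <= k)%nat -> (k + 2 <= N)%nat -> yv k = 3 * s.
Proof.
  intros h1 h2. unfold yv.
  rewrite (sumR_ext _ (fun n => s * INR (ind (k - 1) (k + 1) n))).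
  2:{ intros n hn. rewrite Nfus_one by auto. unfold xv. destruct (Nat.ltb_spec n N); [|lia].
      fold s. ring. }
  rewrite sumR_scal, count_ind.
  replace (if (k + 1 <? k - 1)%nat then 0%nat else (Nat.min (k + 1) (k + 1) + 1 - (k - 1))%nat) with 3%nat.
  simpl. ring. destruct (Nat.ltb_spec (k + 1) (k - 1)); lia.
Qed.

Lemma yv_far k : (N < k)%nat -> yv k = 0.
Proof.
  intros h. unfold yv. apply sumR_zero. intros n hn.
  destruct (Nat.ltb_spec n (k - 1)).
  - pose proof (Nfus_le1 n 1 k). unfold ind in H0.
    destruct (Nat.leb_spec (k - 1) n); [lia|]. cbn [andb] in H0.
    replace (Nfus n 1 k) with 0%nat by lia. simpl; ring.
  - unfold xv. destruct (Nat.ltb_spec n N); [lia|]. ring.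
Qed.

Definition Bk (e : R) (k : nat) : R :=
  s ^ 2 * ((e - 3) ^ 2 + (3 + e) ^ 2 * INR (ind 0 0 k + ind (N - 1) N k)).

Lemma term_bound e k : 3 <= e -> (k <= N)%nat -> (yv k - e * xv k) ^ 2 <= Bk e k.
Proof.
  intros he hk. pose proof s_pos. unfold Bk.
  pose proof (pos_INR (ind 0 0 k + ind (N - 1) N k)).
  destruct (le_lt_dec 1 k) as [h1|h1]; [destruct (le_lt_dec (k + 2) N) as [h2|h2]|].
  - rewrite yv_interior by auto. unfold xv. destruct (Nat.ltb_spec k N); [|lia]. fold s.
    assert (0 <= s ^ 2 * ((3 + e) ^ 2 * INR (ind 0 0 k + ind (N - 1) N k))).
    { apply Rmult_le_pos. apply pow2_ge_0. apply Rmult_le_pos. apply pow2_ge_0. auto. }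
    nra.
  - assert (1 <= INR (ind 0 0 k + ind (N - 1) N k)).
    { replace 1 with (INR 1) by reflexivity. apply le_INR. unfold ind.
      destruct (Nat.leb_spec (N - 1) k), (Nat.leb_spec k N); cbn [andb]; lia. }
    pose proof (yv_range k). destruct (xv_range k) as [E|E]; rewrite E.
    + assert ((yv k - e * s) ^ 2 <= (3 + e) ^ 2 * s ^ 2) by (rewrite <- Rpow_mult_distr; apply sq_bound; nra).
      apply bnd_helper; auto using pow2_ge_0.
    + assert ((yv k - e * 0) ^ 2 <= (3 + e) ^ 2 * s ^ 2) by (rewrite <- Rpow_mult_distr; apply sq_bound; nra).
      apply bnd_helper; auto using pow2_ge_0.
  - assert (k = 0%nat) by lia. subst.
    assert (1 <= INR (ind 0 0 0 + ind (N - 1) N 0)).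
    { replace 1 with (INR 1) by reflexivity. apply le_INR. unfold ind. simpl. lia. }
    pose proof (yv_range 0). destruct (xv_range 0) as [E|E]; rewrite E.
    + assert ((yv 0 - e * s) ^ 2 <= (3 + e) ^ 2 * s ^ 2) by (rewrite <- Rpow_mult_distr; apply sq_bound; nra).
      apply bnd_helper; auto using pow2_ge_0.
    + assert ((yv 0 - e * 0) ^ 2 <= (3 + e) ^ 2 * s ^ 2) by (rewrite <- Rpow_mult_distr; apply sq_bound; nra).
      apply bnd_helper; auto using pow2_ge_0.
Qed.

Lemma sum_Bk e : sum_n (Bk e) N = s ^ 2 * (INR (S N) * (e - 3) ^ 2 + (3 + e) ^ 2 * 3).
Proof.
  unfold Bk. rewrite sumR_scal. f_equal.
  rewrite (sumR_ext _ (fun k => (e - 3) ^ 2 + (3 + e) ^ 2 * (INR (ind 0 0 k) + INR (ind (N - 1) N k)))).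
  2:{ intros; rewrite plus_INR; reflexivity. }
  rewrite sumR_plus, sum_const, sumR_scal, sumR_plus, !count_ind.
  replace (if (N <? 0)%nat then 0%nat else (Nat.min N 0 + 1 - 0)%nat) with 1%nat
    by (destruct (Nat.ltb_spec N 0); lia).
  replace (if (N <? N - 1)%nat then 0%nat else (Nat.min N N + 1 - (N - 1))%nat) with 2%nat
    by (destruct (Nat.ltb_spec N (N - 1)); lia).
  simpl. ring.
Qed.

End Test.

Lemma upper q eps : 0 < q -> q <= 1 -> 0 < eps ->
  exists xi, unit_vec xi /\ kaz_val q (1%nat :: nil) xi < 1 - 3 / qnum q 3 + eps.
Proof.
  intros hq hq1 heps.
  pose proof (dimq_ge q 1 hq) as hd1. change (dimq q 1) with (qnum q 3) in hd1.
  set (e := qnum q 3) in *. assert (he : 3 <= e) by (simpl in hd1; lra).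
  set (dl := eps * e). assert (hdl : 0 < dl) by (unfold dl; nra).
  set (Bc := (e - 3) ^ 2 + 3 * (3 + e) ^ 2).
  destruct (nat_unbounded (Bc / (dl ^ 2))) as [n hn].
  set (N := (n + 2)%nat). assert (hN : (2 <= N)%nat) by (unfold N; lia).
  assert (hNpos : 0 < INR N) by (apply lt_0_INR; lia).
  assert (hBc : Bc < dl ^ 2 * INR N).
  { assert (INR n <= INR N) by (apply le_INR; unfold N; lia).
    assert (0 < dl ^ 2) by (apply pow_lt; auto).
    assert (Bc / dl ^ 2 * dl ^ 2 = Bc) by (field; lra). nra. }
  exists (fun k => RtoC (xv N k)). split. apply xv_unit; auto.
  unfold kaz_val. simpl (map _ _). simpl (fold_right _ _ _).
  change (dimq q 1) with e.
  set (s := / sqrt (INR N)).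
  assert (hs2 : s ^ 2 * INR N = 1) by (apply s2; auto).
  assert (hu : forall k, (rho 1 (fun k => RtoC (xv N k)) k - RtoC e * RtoC (xv N k))%C = RtoC (yv N k - e * xv N k)).
  { intros k. rewrite rho_xv, <- RtoC_mult, <- RtoC_minus. reflexivity. }
  unfold l2norm, sqnorm.
  rewrite (Series_ext _ (fun k => (yv N k - e * xv N k) ^ 2)).
  2:{ intros k. rewrite hu. apply CmodR2. }
  destruct (series_fin (fun k => (yv N k - e * xv N k) ^ 2) N) as [_ hS].
  { intros k hk. rewrite yv_far by auto. unfold xv. destruct (Nat.ltb_spec k N); [lia|]. ring. }
  rewrite hS.
  assert (hle : sum_n (fun k => (yv N k - e * xv N k) ^ 2) N <= s ^ 2 * (INR (S N) * (e - 3) ^ 2 + (3 + e) ^ 2 * 3)).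
  { unfold s. rewrite <- sum_Bk by auto. apply sumR_le. intros k hk. apply term_bound; auto. }
  set (S := sum_n (fun k => (yv N k - e * xv N k) ^ 2) N) in *.
  assert (hS0 : 0 <= S) by (apply sumR_ge0; intros; apply pow2_ge_0).
  assert (hSlt : S < (e - 3 + dl) ^ 2).
  { rewrite S_INR in hle.
    assert (s ^ 2 * ((INR N + 1) * (e - 3) ^ 2 + (3 + e) ^ 2 * 3) = (e - 3) ^ 2 + s ^ 2 * Bc).
    { unfold Bc. transitivity ((s ^ 2 * INR N) * (e - 3) ^ 2 + s ^ 2 * ((e - 3) ^ 2 + 3 * (3 + e) ^ 2)).
      ring. rewrite hs2. ring. }
    assert (s ^ 2 * Bc < dl ^ 2).
    { assert (0 < s ^ 2) by (apply pow_lt; unfold s; apply Rinv_0_lt_compat, sqrt_lt_R0; auto).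
      assert (s ^ 2 * Bc < s ^ 2 * (dl ^ 2 * INR N)) by (apply Rmult_lt_compat_l; auto).
      replace (s ^ 2 * (dl ^ 2 * INR N)) with (dl ^ 2 * (s ^ 2 * INR N)) in H1 by ring.
      rewrite hs2 in H1. lra. }
    nra. }
  assert (hsq : sqrt S < e - 3 + dl).
  { rewrite <- (sqrt_pow2 (e - 3 + dl)) by lra. apply sqrt_lt_1_alt. lra. }
  apply Rmax_lub_lt.
  - assert (1 - 3 / e + eps = (e - 3 + dl) / e) by (unfold dl; field; lra).
    rewrite H. unfold Rdiv. apply Rmult_lt_compat_r. apply Rinv_0_lt_compat; lra. auto.
  - assert (0 <= 1 - 3 / e).
    { assert (3 / e <= 1). { unfold Rdiv. apply (Rmult_le_reg_r e). lra.
        rewrite Rmult_assoc, Rinv_l by lra. lra. } lra. }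
    lra.
Qed.

Lemma KazX1 q : 0 < q -> q <= 1 -> Kaz_X q (1%nat :: nil) = Finite (1 - 3 / qnum q 3).
Proof.
  intros hq hq1. unfold Kaz_X. apply Rbar_is_glb_unique. split.
  - intros x hx. pose proof (KazX_lower q (1%nat :: nil) hq hq1 gen1) as h.
    unfold Kaz_X in h. pose proof (glb_spec (fun r => exists xi, unit_vec xi /\ r = Finite (kaz_val q (1%nat :: nil) xi))) as [hlb _].
    eapply Rbar_le_trans. apply h. apply hlb. auto.
  - intros b hb. destruct b as [b| |]; simpl; auto.
    + destruct (Rle_or_lt b (1 - 3 / qnum q 3)) as [h|h]; auto.
      destruct (upper q (b - (1 - 3 / qnum q 3)) hq hq1 ltac:(lra)) as [xi [hu hv]].
      specialize (hb _ (ex_intro _ xi (conj hu eq_refl))). simpl in hb. lra.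
    + destruct (upper q 1 hq hq1 ltac:(lra)) as [xi [hu hv]].
      specialize (hb _ (ex_intro _ xi (conj hu eq_refl))). simpl in hb. auto.
Qed.

Theorem proposition5p5 (q : R) (hq0 : 0 < q) (hq1 : q <= 1) :
  Kaz_rho q = Finite (1 - 3 / qnum q 3) /\
  1 - 3 / qnum q 3 = 1 - 3 / (q ^ 2 + / q ^ 2 + 1).
Proof.
  split; [|rewrite qnum3 by auto; reflexivity].
  unfold Kaz_rho. apply Rbar_is_glb_unique. split.
  - intros x [X [hg ->]]. apply KazX_lower; auto.
  - intros b hb. rewrite <- (KazX1 q hq0 hq1). apply hb. exists (1%nat :: nil). split; auto. apply gen1.
Qed.
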